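(* If a finite set $S\subset\mathbb{R}^3$ minimally surrounds the origin in $\mathbb{R}^3$, then either (i) $S$ is a critical tetrahedron, or (ii) $S$ is the union of two critical triangles sharing exactly one point, or (iii) $S$ is the disjoint union of a critical triangle and a critical segment, or (iv) $S$ consists of three disjoint critical segments.
   Context: A point set in $\mathbb{R}^d$ surrounds the origin if the origin lies in the interior of its convex hull; it minimally surrounds the origin if it surrounds the origin but no proper subset does. A point set $S$ surrounds the origin in a linear subspace $E$ if $S$ spans $E$ and the origin lies in the relative interior of $\mathrm{conv}(S)$. A $k$-simplex is a set of $k+1$ affinely independent points (segment, triangle, tetrahedron for $k=1,2,3$); a simplex $N$ is critical if it surrounds the origin in its linear hull. *)

(* Defs.v *)
From HB Require Import structures.
From mathcomp Require Import all_boot all_order all_algebra.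
From mathcomp Require Import finmap.
From mathcomp Require Import reals.
Set Implicit Arguments. Unset Strict Implicit. Unset Printing Implicit Defensive.
Import Order.TTheory GRing.Theory Num.Theory.
Local Open Scope ring_scope.
Local Open Scope fset_scope.

Section Defs.
Variables (R : realType) (n : nat).
Notation pt := 'rV[R]_n.

Definition in_conv (S : {fset pt}) (x : pt) : Prop :=
  exists w : pt -> R, (forall v, v \in S -> 0 <= w v) /\
    \sum_(v <- S) w v = 1 /\ \sum_(v <- S) w v *: v = x.

Definition in_span (S : {fset pt}) (x : pt) : Prop :=
  exists w : pt -> R, \sum_(v <- S) w v *: v = x.

(* the origin lies in the interior of conv S (standard topology on R^n,
   given by the max-norm) *)
Definition surrounds (S : {fset pt}) : Prop :=
  exists2 e : R, 0 < e &
    forall x : pt, (forall i, `|x ord0 i| < e) -> in_conv S x.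

(* S surrounds the origin in its linear hull E = span S: the origin lies in
   the relative interior of conv S w.r.t. E *)
Definition surrounds_in_span (S : {fset pt}) : Prop :=
  exists2 e : R, 0 < e &
    forall x : pt, in_span S x -> (forall i, `|x ord0 i| < e) -> in_conv S x.

Definition minimally_surrounds (S : {fset pt}) : Prop :=
  surrounds S /\ forall T : {fset pt}, T `<` S -> ~ surrounds T.

Definition affinely_independent (S : {fset pt}) : Prop :=
  forall w : pt -> R, \sum_(v <- S) w v *: v = 0 -> \sum_(v <- S) w v = 0 ->
    forall v, v \in S -> w v = 0.

Definition simplex (k : nat) (S : {fset pt}) : Prop :=
  #|` S| = k.+1 /\ affinely_independent S.

Definition critical (k : nat) (S : {fset pt}) : Prop :=
  simplex k S /\ surrounds_in_span S.

End Defs.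

(* Main.v *)
Require Import Defs.
From HB Require Import structures.
From mathcomp Require Import all_boot all_order all_algebra.
From mathcomp Require Import finmap.
From mathcomp Require Import reals.
From mathcomp Require Import ring lra.
From Stdlib Require Import Classical.
Set Implicit Arguments. Unset Strict Implicit. Unset Printing Implicit Defensive.
Import Order.TTheory GRing.Theory Num.Theory.
Local Open Scope fset_scope.
Local Open Scope ring_scope.
Section A.
Variable R : realType.
Notation pt := 'rV[R]_3.

Definition posdep (T : {fset pt}) :=
  exists w : pt -> R, (forall v, v \in T -> 0 < w v) /\ \sum_(v <- T) w v *: v = 0.

Lemma posdep_supp (S : {fset pt}) (nu : pt -> R) :
  (forall v, v \in S -> 0 <= nu v) -> \sum_(v <- S) nu v *: v = 0 ->
  posdep [fset v in S | nu v != 0].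
Proof.
move=> nu0 nuS; exists nu; split.
  by move=> v; rewrite !inE /= => /andP[vS nz]; rewrite lt_def nz nu0.
rewrite -[RHS]nuS; apply: (big_fset_incl _).
  by apply/fsubsetP => v; rewrite !inE /= => /andP[].
by move=> v vS; rewrite !inE /= vS /= negbK => /eqP ->; rewrite scale0r.
Qed.

Lemma sum_if (A B : {fset pt}) (w : pt -> R) : A `<=` B ->
  \sum_(v <- B) (if v \in A then w v else 0) *: v = \sum_(v <- A) w v *: v.
Proof.
move=> AB; rewrite -(big_fset_incl _ AB); last first.
  by move=> x _ /negbTE ->; rewrite scale0r.
by apply: eq_big_seq => v ->.
Qed.

Lemma posdepU (A B : {fset pt}) : posdep A -> posdep B -> posdep (A `|` B).
Proof.
move=> [wA [pA sA]] [wB [pB sB]].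
exists (fun v => ((if v \in A then wA v else 0) + (if v \in B then wB v else 0))%R).
split.
  move=> v vAB.
  have hA : (0 <= (if v \in A then wA v else 0 : R))%R.
    by case: ifP => // /pA /ltW.
  have hB : (0 <= (if v \in B then wB v else 0 : R))%R.
    by case: ifP => // /pB /ltW.
  move: vAB; rewrite in_fsetU => /orP[vA|vB].
    by move: hB; rewrite vA; have := pA _ vA; lra.
  by move: hA; rewrite vB; have := pB _ vB; lra.
under eq_bigr do rewrite scalerDl.
rewrite big_split /= !sum_if ?fsubsetUl ?fsubsetUr // sA sB addr0 //.
Qed.


Definition cf (T : {fset pt}) (v x : pt) : R :=
  oapp (fun i => coord (in_tuple (enum_fset T)) i x) 0 (insub (index v (enum_fset T))).

Lemma sum_nth (T : {fset pt}) (F : pt -> pt) :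
  \sum_(v <- T) F v = \sum_(i < size (enum_fset T)) F (tnth (in_tuple (enum_fset T)) i).
Proof.
rewrite (big_nth 0) big_mkord; apply: eq_bigr => i _.
by rewrite (tnth_nth 0).
Qed.

Lemma cf_span (T : {fset pt}) x : x \in <<enum_fset T>>%VS ->
  \sum_(v <- T) cf T v x *: v = x.
Proof.
move=> xT; have def := @coord_span _ _ _ (in_tuple (enum_fset T)) x xT.
rewrite {2}def sum_nth; apply: eq_bigr => i _.
by rewrite /cf (tnth_nth 0) /= index_uniq ?fset_uniq // valK.
Qed.

Lemma span_sum (T : {fset pt}) (w : pt -> R) :
  \sum_(v <- T) w v *: v \in <<enum_fset T>>%VS.
Proof.
rewrite big_seq; apply: rpred_sum => v vT; apply: rpredZ; exact: memv_span.
Qed.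

Lemma in_spanP (T : {fset pt}) x :
  reflect (exists w : pt -> R, \sum_(v <- T) w v *: v = x) (x \in <<enum_fset T>>%VS).
Proof.
apply: (iffP idP) => [xT|[w <-]]; last exact: span_sum.
by exists (fun v => cf T v x); apply: cf_span.
Qed.

Definition linind (T : {fset pt}) :=
  forall w : pt -> R, \sum_(v <- T) w v *: v = 0 -> forall v, v \in T -> w v = 0.

Lemma linind_free (T : {fset pt}) : linind T -> free (enum_fset T).
Proof.
move=> li; apply/(@freeP _ _ _ (in_tuple (enum_fset T))) => k k0 i.
pose w v := oapp k 0 (insub (index v (enum_fset T))).
have sw : \sum_(v <- T) w v *: v = 0.
  rewrite sum_nth -[RHS]k0; apply: eq_bigr => j _.
  by rewrite /w (tnth_nth 0) /= index_uniq ?fset_uniq // valK.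
have := li w sw (tnth (in_tuple (enum_fset T)) i).
by rewrite /w (tnth_nth 0) /= index_uniq ?fset_uniq // valK mem_nth // => /(_ isT).
Qed.

Lemma linind_dim (T : {fset pt}) : linind T -> \dim <<enum_fset T>>%VS = #|` T|.
Proof. by move/linind_free/eqP. Qed.

Lemma dim_span_le (T : {fset pt}) : (\dim <<enum_fset T>>%VS <= #|` T|)%N.
Proof. exact: dim_span. Qed.

End A.

Section C.
Variable R : realType.
Notation pt := 'rV[R]_3.

Lemma abs_le_sum (x : pt) i : `|x ord0 i| <= \sum_j `|x ord0 j|.
Proof. by rewrite (bigD1 i) //= lerDl sumr_ge0. Qed.

Lemma small_scale (x : pt) (e : R) : 0 < e ->
  exists2 c, 0 < c & forall i, `|(c *: x) ord0 i| < e.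
Proof.
move=> e0; set s := \sum_j `|x ord0 j|.
have s0 : 0 <= s by rewrite sumr_ge0.
have c0 : 0 < e / (1 + s) by rewrite divr_gt0 // ltr_pwDl.
exists (e / (1 + s)) => // i; rewrite mxE normrM (gtr0_norm c0).
apply: (le_lt_trans (ler_wpM2l (ltW c0) (abs_le_sum x i))).
rewrite mulrAC ltr_pdivrMr ?ltr_pwDl // mulrDr mulr1 -/s; lra.

Qed.

Lemma surr_span (S : {fset pt}) : surrounds S -> <<enum_fset S>>%VS = fullv.
Proof.
move=> [e e0 He]; apply/eqP; rewrite eqEsubv subvf /=; apply/subvP => x _.
have [c c0 Hc] := small_scale x e0.
have [w [_ [_ Hw]]] := He _ Hc.
have : c *: x \in <<enum_fset S>>%VS by rewrite -Hw span_sum.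
move/(memvZ c^-1); rewrite scalerA mulVf ?scale1r //; exact: lt0r_neq0.
Qed.

Lemma min_pos (s : seq pt) (f : pt -> R) : (forall v, v \in s -> 0 < f v) ->
  exists2 m, 0 < m & forall v, v \in s -> m <= f v.
Proof.
elim: s => [|a s IH] H; first by exists 1.
have [|m m0 Hm] := IH; first by move=> v vs; apply: H; rewrite inE vs orbT.
have fa : 0 < f a by apply: H; rewrite inE eqxx.
exists (Num.min m (f a)); first by rewrite lt_min m0 fa.
move=> v; rewrite inE => /orP[/eqP ->|vs]; first by rewrite ge_min lexx orbT.
by rewrite ge_min Hm.
Qed.

Lemma posdep_comb (S : {fset pt}) :
  (forall v, v \in S -> exists nu : pt -> R, [/\ forall u, u \in S -> 0 <= nu u,
      \sum_(u <- S) nu u *: u = 0 & 0 < nu v]) -> posdep S.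
Proof.
move=> H.
suff : forall s : seq pt, {subset s <= S} -> exists nu : pt -> R,
   [/\ forall u, u \in S -> 0 <= nu u,
      \sum_(u <- S) nu u *: u = 0 & forall v, v \in s -> 0 < nu v].
  by move/(_ (enum_fset S) (fun _ h => h)) => [nu [nu0 nuS nup]]; exists nu; split.
elim => [|a s IH] sS.
  exists (fun _ => 0); split.
  - by move=> u _; exact: lexx.
  - by rewrite big1 // => u _; rewrite scale0r.
  - by [].
have [|nu [nu0 nuS nup]] := IH; first by move=> v vs; apply: sS; rewrite inE vs orbT.
have [|mu [mu0 muS mua]] := H a; first by apply: sS; rewrite inE eqxx.
exists (fun u => nu u + mu u); split.
- by move=> u uS; rewrite addr_ge0 ?nu0 ?mu0.
- by under eq_bigr do rewrite scalerDl; rewrite big_split /= nuS muS addr0.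
- move=> v; rewrite inE => /orP[/eqP ->|vs].
    by rewrite ltr_wpDl ?nu0 //; apply: sS; rewrite inE eqxx.
  by rewrite ltr_pwDl ?nup // mu0 //; apply: sS; rewrite inE vs orbT.
Qed.


Lemma surr_posdep (S : {fset pt}) : surrounds S -> posdep S.
Proof.
move=> [e e0 He]; apply: posdep_comb => v vS.
have [c c0 Hc] := small_scale (- v) e0.
have [w [w0 [_ Hw]]] := He _ Hc.
exists (fun u => w u + (if u \in [fset v] then c else 0)); split.
- move=> u uS; rewrite addr_ge0 ?w0 //; case: ifP => _ //; exact: ltW.
- under eq_bigr do rewrite scalerDl.
  rewrite big_split /= Hw sum_if ?fsub1set // big_seq_fset1.
  by rewrite scalerN addNr.
- by rewrite inE eqxx ltr_wpDl ?w0.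
Qed.


Lemma cf_lin (T : {fset pt}) v (x : pt) :
  cf T v x = \sum_j x ord0 j * cf T v (delta_mx ord0 j).
Proof.
rewrite /cf; case: insubP => [i _ _|_] /=; last first.
  by rewrite big1 // => j _; rewrite mulr0.
rewrite {1}(row_sum_delta x) linear_sum; apply: eq_bigr => j _.
by rewrite linearZ.
Qed.

Lemma cf_bound (T : {fset pt}) v (x : pt) (e : R) : (forall i, `|x ord0 i| <= e) ->
  `|cf T v x| <= e * \sum_j `|cf T v (delta_mx ord0 j)|.
Proof.
move=> Hx; rewrite cf_lin mulr_sumr; apply: (le_trans (ler_norm_sum _ _ _)).
apply: ler_sum => j _; rewrite normrM; apply: ler_wpM2r => //.
Qed.

Lemma le_sum_fset (T : {fset pt}) (f : pt -> R) v0 : v0 \in T ->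
  (forall v, v \in T -> 0 <= f v) -> f v0 <= \sum_(v <- T) f v.
Proof.
move=> v0T f0; rewrite (big_fsetD1 v0 v0T) /= lerDl big_seq sumr_ge0 // => v.
by rewrite in_fsetD1 => /andP[_ /f0].
Qed.


Lemma posdep_surr_span (T : {fset pt}) : posdep T -> T != fset0 ->
  surrounds_in_span T.
Proof.
move=> [l [l0 lS]] /fset0Pn [v0 v0T].
have [m m0 Hm] := min_pos (s := enum_fset T) l0.
pose l' v := l v / m.
have l'1 : forall v, v \in T -> 1 <= l' v.
  by move=> v vT; rewrite /l' ler_pdivlMr // mul1r Hm.
have l'S : \sum_(v <- T) l' v *: v = 0.
  under eq_bigr do rewrite /l' mulrC -scalerA.
  by rewrite -scaler_sumr lS scaler0.
pose L := \sum_(v <- T) l' v.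
have L1 : 1 <= L.
  apply: le_trans (l'1 _ v0T) _; apply: le_sum_fset => // v vT.
  by apply: le_trans (l'1 _ vT).
pose N := \sum_(v <- T) (1 : R).
have N0 : 0 <= N by rewrite sumr_ge0.
pose K := \sum_(v <- T) \sum_j `|cf T v (delta_mx ord0 j)|.
have K0 : 0 <= K by apply: sumr_ge0 => v _; apply: sumr_ge0 => j _.
pose d := 1 / (2 * (N + L)).
have NL0 : 0 < N + L by lra.
have d0 : 0 < d by rewrite divr_gt0 // mulr_gt0.
have dNL : d * N + d * L = 1 / 2.
  by rewrite /d -mulrDr !mul1r invfM -mulrA mulVf ?mulr1 // lt0r_neq0.
exists (d / (K + 1)); first by rewrite divr_gt0 //; lra.
move=> x /in_spanP xT Hx.
pose c v := cf T v x.
have cS : \sum_(v <- T) c v *: v = x by apply: cf_span.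
have cb : forall v, v \in T -> `|c v| <= d.
  move=> v vT; apply: le_trans (cf_bound T v (e := d / (K + 1)) _) _.
    by move=> i; apply: ltW.
  rewrite mulrAC ler_pdivrMr; last by lra.
  have : \sum_j `|cf T v (delta_mx ord0 j)| <= K.
    by apply: le_sum_fset => // u _; rewrite sumr_ge0.
  move=> h; have := ler_wpM2l (ltW d0) h; lra.
have sc : `|\sum_(v <- T) c v| <= d * N.
  apply: le_trans (ler_norm_sum _ _ _) _; rewrite /N mulr_sumr big_seq [X in _ <= X]big_seq.
  by apply: ler_sum => v vT; rewrite mulr1 cb.
pose t := (1 - \sum_(v <- T) c v) / L.
have L0 : 0 < L by lra.
have td : d <= t.
  rewrite /t ler_pdivlMr //.
  have := ler_norm (\sum_(v <- T) c v); lra.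
exists (fun v => c v + t * l' v); split.
- move=> v vT.
  have h1 : t <= t * l' v.
    by rewrite -{1}(mulr1 t) ler_wpM2l ?l'1 //; lra.
  have := cb v vT; rewrite ler_norml => /andP[h2 _]; lra.
split.
- rewrite big_split /= -mulr_sumr -/L /t mulfVK; last exact: lt0r_neq0.
  by rewrite addrC subrK.
- under eq_bigr do rewrite scalerDl -scalerA.
  by rewrite big_split /= cS -scaler_sumr l'S scaler0 addr0.
Qed.

End C.

Section D.
Variable R : realType.
Notation pt := 'rV[R]_3.

Lemma argmin (s : seq pt) (P : pred pt) (f : pt -> R) : has P s ->
  exists x, [/\ x \in s, P x & forall y, y \in s -> P y -> f x <= f y].
Proof.
elim: s => [|a s IH] //= /orP[Pa|hs].
  case: (boolP (has P s)) => [/IH [x [xs Px Hx]]|nhs].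
    case: (lerP (f a) (f x)) => [le|lt].
      exists a; split => //; first by rewrite inE eqxx.
      move=> y; rewrite inE => /orP[/eqP ->|ys Py]; first by rewrite lexx.
      exact: le_trans le (Hx _ ys Py).
    exists x; split => //; first by rewrite inE xs orbT.
    move=> y; rewrite inE => /orP[/eqP ->|ys Py]; first by rewrite ltW.
    exact: Hx.
  exists a; split => //; first by rewrite inE eqxx.
  move=> y; rewrite inE => /orP[/eqP ->|ys Py]; first by rewrite lexx.
  by move/hasPn: nhs => /(_ _ ys); rewrite Py.
have [x [xs Px Hx]] := IH hs.
case: (boolP (P a)) => Pa.
  case: (lerP (f a) (f x)) => [le|lt].
    exists a; split => //; first by rewrite inE eqxx.
    move=> y; rewrite inE => /orP[/eqP ->|ys Py]; first by rewrite lexx.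
    exact: le_trans le (Hx _ ys Py).
  exists x; split => //; first by rewrite inE xs orbT.
  move=> y; rewrite inE => /orP[/eqP ->|ys Py]; first by rewrite ltW.
  exact: Hx.
exists x; split => //; first by rewrite inE xs orbT.
move=> y; rewrite inE => /orP[/eqP ->|ys Py]; first by rewrite (negbTE Pa).
exact: Hx.
Qed.

Lemma step (T : {fset pt}) (l w : pt -> R) :
  (forall v, v \in T -> 0 < l v) -> \sum_(v <- T) l v *: v = 0 ->
  \sum_(v <- T) w v *: v = 0 -> (exists2 u, u \in T & 0 < w u) ->
  exists T', [/\ T' `<` T, posdep T' & forall v, v \in T -> w v <= 0 -> v \in T'].
Proof.
move=> l0 lS wS [u uT wu].
have [|u0 [u0T wu0 Hu0]] := argmin (s := enum_fset T) (P := fun v => 0 < w v)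
   (fun v => l v / w v).
  by apply/hasP; exists u.
pose t := l u0 / w u0.
have t0 : 0 < t by rewrite divr_gt0 // l0.
pose mu v := l v - t * w v.
have mu0 : forall v, v \in T -> 0 <= mu v.
  move=> v vT; rewrite /mu subr_ge0; case: (ltrP 0 (w v)) => wv.
    by rewrite -ler_pdivlMr // Hu0.
  apply: le_trans (ltW (l0 _ vT)); rewrite pmulr_rle0 //.
have muS : \sum_(v <- T) mu v *: v = 0.
  under eq_bigr do rewrite /mu scalerBl -scalerA.
  by rewrite sumrB -scaler_sumr lS wS scaler0 subr0.
exists [fset v in T | mu v != 0]; split.
- rewrite fproperEneq; apply/andP; split.
    apply/negP => /eqP /fsetP /(_ u0); rewrite !inE u0T /= /mu /t.
    by rewrite divfK ?subrr ?eqxx // gt_eqF.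
  by apply/fsubsetP => v; rewrite !inE /= => /andP[].
- exact: posdep_supp.
- move=> v vT wv; rewrite !inE /= vT /= /mu; apply: lt0r_neq0.
  have := l0 _ vT; have : t * w v <= 0 by rewrite pmulr_rle0.
  lra.
Qed.


Lemma sum_ge0_eq0 (T : {fset pt}) (f : pt -> R) : (forall v, v \in T -> 0 <= f v) ->
  \sum_(v <- T) f v = 0 -> forall v, v \in T -> f v = 0.
Proof.
move=> f0 fs v vT; rewrite big_seq in fs.
have := eqxx (0 : R); rewrite -{1}fs psumr_eq0 // => /allP /(_ v vT).
by rewrite vT => /eqP.
Qed.

Definition circ (C : {fset pt}) := [/\ C != fset0, posdep C & affinely_independent C].

Lemma signs (T : {fset pt}) (w : pt -> R) u : u \in T -> w u != 0 ->
  \sum_(v <- T) w v = 0 -> (exists2 v, v \in T & 0 < w v).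
Proof.
move=> uT wu ws; apply: NNPP => H.
have h : forall v, v \in T -> 0 <= - w v.
  move=> v vT; rewrite oppr_ge0; case: (lerP (w v) 0) => // wv.
  by exfalso; apply: H; exists v.
have := sum_ge0_eq0 h; rewrite sumrN ws oppr0 => /(_ erefl u uT) /eqP.
by rewrite oppr_eq0 (negbTE wu).
Qed.

Lemma cover_circ n : forall T : {fset pt}, (#|` T| <= n)%N -> posdep T ->
  forall v, v \in T -> exists C, [/\ C `<=` T, circ C & v \in C].
Proof.
elim: n => [|n IH] T Tn pT v vT.
  by move: Tn; rewrite leqn0 => /eqP/cardfs0_eq Te; rewrite Te inE in vT.
case: (classic (affinely_independent T)) => [ai|nai].
  exists T; split => //.
  by split => //; apply/fset0Pn; exists v.
have [w [ws [wsum [u [uT wu]]]]] : exists w : pt -> R,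
   [/\ \sum_(v <- T) w v *: v = 0, \sum_(v <- T) w v = 0 & exists2 u, u \in T & w u != 0].
  apply: NNPP => H; apply: nai => w ws wsum u uT; apply: NNPP => wu; apply: H.
  by exists w; split => //; exists u => //; apply/eqP.
have [l [l0 lS]] := pT.
have [T1 [T1T pT1 H1]] := step l0 lS ws (signs uT wu wsum).
have ws' : \sum_(v <- T) (- w v) *: v = 0.
  by under eq_bigr do rewrite scaleNr; rewrite sumrN ws oppr0.
have wsum' : \sum_(v <- T) (- w v) = 0 by rewrite sumrN wsum oppr0.
have wu' : - w u != 0 by rewrite oppr_eq0.
have [T2 [T2T pT2 H2]] := step l0 lS ws' (signs (w := fun v => - w v) uT wu' wsum').
have sub : forall T', T' `<` T -> (#|` T'| <= n)%N.
  by move=> T' /fproper_ltn_card h; rewrite -ltnS (leq_trans h).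
case: (lerP (w v) 0) => wv.
  have [C [CT1 cC vC]] := IH T1 (sub _ T1T) pT1 v (H1 v vT wv).
  by exists C; split => //; apply: fsubset_trans CT1 (fproper_sub T1T).
have wv' : - w v <= 0 by rewrite oppr_le0 ltW.
have [C [CT2 cC vC]] := IH T2 (sub _ T2T) pT2 v (H2 v vT wv').
by exists C; split => //; apply: fsubset_trans CT2 (fproper_sub T2T).
Qed.

End D.

Section E.
Variable R : realType.
Notation pt := 'rV[R]_3.
Notation sp T := (<<enum_fset T>>%VS).

Lemma sum_if_r (A B : {fset pt}) (w : pt -> R) : A `<=` B ->
  \sum_(v <- B) (if v \in A then w v else 0) = \sum_(v <- A) w v.
Proof.
move=> AB; rewrite -(big_fset_incl _ AB); last by move=> x _ /negbTE ->.
by apply: eq_big_seq => v ->.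
Qed.

Lemma circ_linind (C D : {fset pt}) : circ C -> D `<` C -> linind D.
Proof.
move=> [Cn0 [l [l0 lS]] ai] DC w wS v vD.
have DsC := fproper_sub DC.
pose w' v := if v \in D then w v else 0.
have w'S : \sum_(v <- C) w' v *: v = 0 by rewrite sum_if.
have w's : \sum_(v <- C) w' v = \sum_(v <- D) w v by rewrite sum_if_r.
have vC : v \in C by apply: (fsubsetP DsC).
case: (eqVneq (\sum_(v <- D) w v) 0) => [s0|s0].
  by have := ai w' w'S (etrans w's s0) v vC; rewrite /w' vD.
exfalso.
have /fsubsetPn [c cC cD] : ~~ (C `<=` D).
  by apply/negP => CD; move: DC; rewrite fproperE CD andbF.
have [c0 c0C] : exists c0, c0 \in C by apply/fset0Pn.
pose L := \sum_(v <- C) l v.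
have L0 : 0 < L.
  apply: lt_le_trans (l0 _ cC) _; apply: le_sum_fset => // u uC.
  exact: ltW (l0 _ uC).
pose u x := w' x / (\sum_(v <- D) w v) - l x / L.
have uS : \sum_(v <- C) u v *: v = 0.
  under eq_bigr do rewrite /u scalerBl mulrC -scalerA [l _ / L]mulrC -scalerA.
  by rewrite sumrB -!scaler_sumr w'S lS !scaler0 subr0.
have us : \sum_(v <- C) u v = 0.
  rewrite /u sumrB -!mulr_suml w's -/L mulfV // mulfV ?subrr //.
  exact: lt0r_neq0.
have := ai u uS us c cC; rewrite /u /w' (negbTE cD) mul0r sub0r => /eqP.
rewrite oppr_eq0 mulf_eq0 invr_eq0 => /orP[|] /eqP h.
  by have := l0 _ cC; rewrite h ltxx.
by move: L0; rewrite h ltxx.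
Qed.

Lemma circ_span_D1 (C : {fset pt}) c : circ C -> c \in C -> sp C = sp (C `\ c).
Proof.
move=> [Cn0 [l [l0 lS]] ai] cC; apply/eqP; rewrite eqEsubv; apply/andP; split.
  apply/span_subvP => x xC; case: (eqVneq x c) => [->|xc]; last first.
    by apply: memv_span; rewrite in_fsetD1 xc.
  move: lS; rewrite (big_fsetD1 c cC) /= => /eqP; rewrite addr_eq0 => /eqP h.
  have : (l c)^-1 *: (l c *: c) \in sp (C `\ c).
    by apply: memvZ; rewrite h memvN span_sum.
  by rewrite scalerA mulVf ?scale1r // lt0r_neq0 ?l0.
by apply: sub_span => x; rewrite in_fsetD1 => /andP[].
Qed.

Lemma circ_dim (C : {fset pt}) : circ C -> \dim (sp C) = (#|` C|).-1.
Proof.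
move=> cC; have [Cn0 _ _] := cC; have [c cIn] := fset0Pn _ Cn0.
rewrite (circ_span_D1 cC cIn) linind_dim; last first.
  by apply: circ_linind cC _; exact: fproperD1.
by rewrite [in RHS](cardfsD1 c) cIn.
Qed.

Lemma circ_sub_span (C D : {fset pt}) : circ C -> D `<=` C ->
  (#|` C| <= (#|` D|).+1)%N -> sp D = sp C.
Proof.
move=> cC DC cardD; have [->|DneC] := eqVneq D C; first by [].
have DpC : D `<` C by rewrite fproperEneq DneC DC.
apply/eqP; rewrite eqEdim; apply/andP; split.
  by apply: sub_span => x; apply: (fsubsetP DC).
rewrite circ_dim // (linind_dim (circ_linind cC DpC)).
by rewrite -subn1 leq_subLR add1n.
Qed.

Lemma circ_card2 (C : {fset pt}) x : circ C -> x \in C -> x != 0 -> (2 <= #|` C|)%N.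
Proof.
move=> [Cn0 [l [l0 lS]] _] xC x0; rewrite ltnNge; apply/negP => h.
have /cardfs1P [y Cy] : #|` C| == 1%N.
  by rewrite eqn_leq h /= cardfs_gt0.
move: xC lS; rewrite Cy inE big_seq_fset1 => /eqP xy; rewrite -xy => /eqP.
rewrite scaler_eq0 (negbTE x0) orbF => /eqP h0.
by have := l0 y; rewrite Cy inE eqxx -xy h0 ltxx => /(_ isT).
Qed.

End E.

Section F.
Variable R : realType.
Notation pt := 'rV[R]_3.
Notation sp T := (<<enum_fset T>>%VS).

Lemma sp_U (A B : {fset pt}) : sp (A `|` B) = (sp A + sp B)%VS.
Proof.
apply/eqP; rewrite eqEsubv; apply/andP; split.
  apply/span_subvP => x; rewrite in_fsetU => /orP[xA|xB].
    by apply: (subvP (addvSl _ _)); apply: memv_span.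
  by apply: (subvP (addvSr _ _)); apply: memv_span.
by rewrite subv_add !sub_span // => x xI; rewrite in_fsetU xI ?orbT.
Qed.

Lemma sp_sub (A B : {fset pt}) : A `<=` B -> (sp A <= sp B)%VS.
Proof. by move=> AB; apply: sub_span => x; apply: (fsubsetP AB). Qed.

Lemma dim_lt_add (U V : {vspace pt}) : ~~ (V <= U)%VS -> (\dim U < \dim (U + V))%N.
Proof.
move=> VU; have := dimv_sum_cap U V.
have := dimv_leqif_eq (capvSr U V).
have -> : (U :&: V == V)%VS = false.
  by apply/negP => /eqP h; move: VU; rewrite -h capvSl.
move=> [h1 /negbT h2] h3.
have h4 : (\dim (U :&: V) < \dim V)%N by rewrite ltn_neqAle h2 h1.
apply: contraTT h4; rewrite -!leqNgt => h5.
by rewrite -(leq_add2l (\dim (U + V))) h3 leq_add2r.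
Qed.

Lemma dim_le3 (U : {vspace pt}) : (\dim U <= 3)%N.
Proof. by have := dimvS (subvf U); rewrite dimvf. Qed.

Lemma full_dim (U : {vspace pt}) : (3 <= \dim U)%N -> U = fullv.
Proof. by move=> h; apply/eqP; rewrite eqEdim subvf dimvf. Qed.

Lemma exists_out (S : {fset pt}) (U : {vspace pt}) : sp S = fullv ->
  (\dim U < 3)%N -> exists2 x, x \in S & x \notin U.
Proof.
move=> spS dU; apply: NNPP => H.
have : (sp S <= U)%VS.
  apply/span_subvP => x xS; apply: NNPP => /negP xU; apply: H; by exists x.
by rewrite spS => /dimvS; rewrite dimvf leqNgt dU.
Qed.

Lemma circ_meet (C T : {fset pt}) : circ C -> ~~ (sp C <= sp T)%VS ->
  ((#|` C `&` T|).+2 <= #|` C|)%N.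
Proof.
move=> cC CT; rewrite ltnNge; apply/negP => h.
move: CT; rewrite -(circ_sub_span cC (fsubsetIl C T) h) => /negP; apply.
exact/sp_sub/fsubsetIr.
Qed.

Lemma posdep_surr (T : {fset pt}) : posdep T -> sp T = fullv -> surrounds T.
Proof.
move=> pT spT; have Tn0 : T != fset0.
  apply/negP => /eqP T0; have := dim_span_le T.
  by rewrite spT dimvf T0 cardfs0.
have [e e0 He] := posdep_surr_span pT Tn0.
exists e => // x Hx; apply: He Hx; apply/in_spanP; rewrite spT; exact: memvf.
Qed.

Lemma mini (S T : {fset pt}) : minimally_surrounds S -> T `<=` S -> posdep T ->
  sp T = fullv -> T = S.
Proof.
move=> [_ HS] TS pT spT; apply/eqP; apply: NNPP => /negP TneS.
by apply: (HS T); [rewrite fproperEneq TneS TS | exact: posdep_surr].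
Qed.

Lemma shift (T : {fset pt}) (l a : pt -> R) :
  (forall v, v \in T -> 0 < l v) -> \sum_(v <- T) l v *: v = 0 -> T != fset0 ->
  exists b : pt -> R, [/\ forall v, v \in T -> 0 <= b v,
    \sum_(v <- T) b v *: v = \sum_(v <- T) a v *: v & exists2 p, p \in T & b p = 0].
Proof.
move=> l0 lS /fset0Pn [v0 v0T].
have [|p [pT _ Hp]] := argmin (s := enum_fset T) (P := predT) (fun v => a v / l v).
  by apply/hasP; exists v0.
pose t := a p / l p.
exists (fun v => a v - t * l v); split.
- move=> v vT; rewrite subr_ge0 -ler_pdivlMr ?l0 //; exact: Hp.
- under eq_bigr do rewrite scalerBl -scalerA.
  by rewrite sumrB -scaler_sumr lS scaler0 subr0.
- by exists p => //; rewrite /t divfK ?subrr // lt0r_neq0 ?l0.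
Qed.

Lemma sum_split (A B : {fset pt}) (f g : pt -> R) : [disjoint A & B] ->
  \sum_(v <- A `|` B) (if v \in A then f v else g v) *: v =
  \sum_(v <- A) f v *: v + \sum_(v <- B) g v *: v.
Proof.
move=> /fdisjointP dAB.
rewrite -(sum_if f (fsubsetUl A B)) -(sum_if g (fsubsetUr A B)) -big_split /=.
rewrite big_seq [RHS]big_seq; apply: eq_bigr => v; rewrite in_fsetU.
case: (boolP (v \in A)) => [vA _|vA /= vB]; last by rewrite vB scale0r add0r.
by rewrite (negbTE (dAB _ vA)) scale0r addr0.
Qed.

End F.

Section G.
Variable R : realType.
Notation pt := 'rV[R]_3.
Notation sp T := (<<enum_fset T>>%VS).

Lemma grow (A B : {fset pt}) y : A `<=` B -> y \in B -> y \notin sp A ->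
  (\dim (sp A) < \dim (sp B))%N.
Proof.
move=> AB yB yA; have h : ~~ (sp B <= sp A)%VS.
  by apply/negP => /subvP /(_ y (memv_span yB)); apply/negP.
apply: leq_trans (dim_lt_add h) _; apply: dimvS.
by rewrite subv_add subvv sp_sub.
Qed.

Lemma escape (S T Q : {fset pt}) y z : minimally_surrounds S ->
  T `<=` S -> posdep T -> Q `<=` S -> posdep Q -> y \in Q -> y \notin sp T ->
  \dim (sp T) = 2%N -> z \in S -> z \notin T -> z \notin Q -> False.
Proof.
move=> mS TS pT QS pQ yQ yT dT zS zT zQ.
have TQS : T `|` Q `<=` S by rewrite fsubUset TS QS.
have e := mini mS TQS (posdepU pT pQ).
have : sp (T `|` Q) = fullv.
  apply: full_dim; have := grow (fsubsetUl T Q) (y := y); rewrite dT.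
  by apply; rewrite // in_fsetU yQ orbT.
move/e => TQ; move: zS; rewrite -TQ in_fsetU (negbTE zT) (negbTE zQ).
by [].
Qed.

Lemma tri_line (T : {fset pt}) (U : {vspace pt}) x y : circ T -> #|` T| = 3%N ->
  x \in T -> y \in T -> x != y -> x \in U -> y \in U -> (\dim U <= 1)%N -> False.
Proof.
move=> cT h3 xT yT xy xU yU dU.
have DT : [fset x; y] `<=` T by apply/fsubsetP => z; rewrite !inE => /orP[]/eqP->.
have := circ_sub_span cT DT; rewrite cardfs2 xy h3 => /(_ isT) e.
have : (sp T <= U)%VS.
  by rewrite -e; apply/span_subvP => z; rewrite !inE => /orP[]/eqP->.
by move/dimvS; rewrite circ_dim // h3 => /leq_trans /(_ dU).
Qed.


Lemma bad (S T1 T2 : {fset pt}) : minimally_surrounds S -> circ T1 -> circ T2 ->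
  #|` T1| = 3%N -> #|` T2| = 3%N -> [disjoint T1 & T2] -> S = T1 `|` T2 ->
  ~~ (sp T2 <= sp T1)%VS -> False.
Proof.
move=> mS c1 c2 h1 h2 dis SU n21.
have d1 : \dim (sp T1) = 2%N by rewrite circ_dim // h1.
have d2 : \dim (sp T2) = 2%N by rewrite circ_dim // h2.
have full12 : (sp T1 + sp T2)%VS = fullv.
  by apply: full_dim; have := dim_lt_add n21; rewrite d1.
have dL : \dim (sp T1 :&: sp T2)%VS = 1%N.
  by have := dimv_sum_cap (sp T1) (sp T2); rewrite full12 dimvf d1 d2 => /eqP; rewrite eqn_add2l => /eqP.
set L := (sp T1 :&: sp T2)%VS in dL.
pose u := vpick L.
have u0 : u != 0 by rewrite vpick0 -dimv_eq0 dL.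
have /memv_capP [uP1 uP2] : u \in L by apply: memv_pick.
have [T1n0 [l1 [l10 l1S]] _] := c1.
have [T2n0 [l2 [l20 l2S]] _] := c2.
have [a aS] := in_spanP _ _ uP1.
have [b [b0 bS [p pin1 bp]]] := shift a l10 l1S T1n0.
rewrite aS in bS.
have : - u \in sp T2 by rewrite memvN.
move/in_spanP => [a' a'S].
have [g [g0 gS [q qin2 gq]]] := shift a' l20 l2S T2n0.
rewrite a'S in gS.
have T1S : T1 `<=` S by rewrite SU fsubsetUl.
have T2S : T2 `<=` S by rewrite SU fsubsetUr.
have /fdisjointP dis' := dis.
have inS : forall v, v \in S -> v \notin T1 -> v \in T2.
  by move=> v; rewrite SU in_fsetU => /orP[->|].
pose nu v := if v \in T1 then b v else g v.
have nuS : \sum_(v <- S) nu v *: v = 0 by rewrite SU sum_split // bS gS subrr.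
have nu0 : forall v, v \in S -> 0 <= nu v.
  move=> v vS; rewrite /nu; case: ifP => vT1; first exact: b0.
  by apply: g0; apply: inS => //; rewrite vT1.
pose Q := [fset v in S | nu v != 0].
have pQ : posdep Q := posdep_supp nu0 nuS.
have QS : Q `<=` S by apply/fsubsetP => v; rewrite !inE => /andP[].
have pT1 : posdep T1 by exists l1.
have pT2 : posdep T2 by exists l2.
case: (classic (exists y, [/\ y \in T2, g y != 0 & y \notin sp T1])).
  move=> [y [yT2 gy yP1]].
  apply: (escape mS T1S pT1 QS pQ (y := y) (z := q)) => //.
  - have yT1 : y \notin T1 by apply/negP => h; have := dis' _ h; rewrite yT2.
    by rewrite !inE (fsubsetP T2S _ yT2) /nu /= (negbTE yT1).
  - exact: (fsubsetP T2S).
  - apply/negP => qT1; by have := dis' _ qT1; rewrite qin2.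
  - rewrite !inE /nu /= negb_and negbK; apply/orP; right.
    case: ifP => qT1; last by rewrite gq.
    by have := dis' _ qT1; rewrite qin2.
move=> HA.
case: (classic (exists x, [/\ x \in T1, b x != 0 & x \notin sp T2])).
  move=> [y [yT1 gy yP2]].
  apply: (escape mS T2S pT2 QS pQ (y := y) (z := p)) => //.
  - by rewrite !inE (fsubsetP T1S _ yT1) /nu /= yT1.
  - exact: (fsubsetP T1S).
  - by apply/negP => pT2'; have := dis' _ pin1; rewrite pT2'.
  - by rewrite !inE /nu /= pin1 bp eqxx andbF.
move=> HB.
have HA' : forall y, y \in T2 -> g y != 0 -> y \in L.
  move=> y yT2 gy; rewrite memv_cap (memv_span yT2) andbT.
  by apply: NNPP => /negP yP1; apply: HA; exists y.
have HB' : forall x, x \in T1 -> b x != 0 -> x \in L.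
  move=> x xT1 bx; rewrite memv_cap (memv_span xT1) /=.
  by apply: NNPP => /negP xP2; apply: HB; exists x.
have [aj [ajT1 baj]] : exists aj, aj \in T1 /\ b aj != 0.
  apply: NNPP => H; move/eqP: u0; apply; rewrite -bS big_seq big1 // => v vT1.
  have : b v = 0 by apply: NNPP => /eqP bv; apply: H; exists v.
  by move=> ->; rewrite scale0r.
have [bk [bkT2 gbk]] : exists bk, bk \in T2 /\ g bk != 0.
  apply: NNPP => H; move/eqP: u0; apply; apply/eqP; rewrite -oppr_eq0 -gS big_seq.
  apply/eqP; apply: big1 => v vT2.
  have : g v = 0 by apply: NNPP => /eqP gv; apply: H; exists v.
  by move=> ->; rewrite scale0r.
have ub : forall x, x \in T1 -> x != aj -> b x = 0.
  move=> x xT1 xaj; apply: NNPP => /eqP bx.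
  exact: (tri_line c1 h1 xT1 ajT1 xaj (HB' _ xT1 bx) (HB' _ ajT1 baj) (eq_leq dL)).
have ug : forall x, x \in T2 -> x != bk -> g x = 0.
  move=> x xT2 xbk; apply: NNPP => /eqP gx.
  exact: (tri_line c2 h2 xT2 bkT2 xbk (HA' _ xT2 gx) (HA' _ bkT2 gbk) (eq_leq dL)).
pose c1' := b aj / l1 aj.
pose c2' := g bk / l2 bk.
have c1p : 0 < c1' by rewrite divr_gt0 ?l10 // lt_def baj b0.
have c2p : 0 < c2' by rewrite divr_gt0 ?l20 // lt_def gbk g0.
pose rho v := (if v \in T1 then c1' * l1 v else c2' * l2 v) - nu v.
have rhoS : \sum_(v <- S) rho v *: v = 0.
  under eq_bigr do rewrite /rho scalerBl.
  rewrite sumrB nuS subr0 SU sum_split //.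
  under eq_bigr do rewrite -scalerA.
  rewrite -scaler_sumr l1S scaler0 add0r.
  under eq_bigr do rewrite -scalerA.
  by rewrite -scaler_sumr l2S scaler0.
have rho1 : forall v, v \in T1 -> rho v = c1' * l1 v - b v.
  by move=> v vT1; rewrite /rho /nu vT1.
have rho2 : forall v, v \in T2 -> rho v = c2' * l2 v - g v.
  move=> v vT2; rewrite /rho /nu; case: ifP => // vT1.
  by have := dis' _ vT1; rewrite vT2.
have rhoaj : rho aj = 0 by rewrite rho1 // /c1' divfK ?subrr // lt0r_neq0 ?l10.
have rho0 : forall v, v \in S -> 0 <= rho v.
  move=> v vS; case: (boolP (v \in T1)) => vT1.
    rewrite rho1 //; case: (eqVneq v aj) => [->|vaj].
      by rewrite /c1' divfK ?subrr // lt0r_neq0 ?l10.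
    by rewrite ub // subr0 ltW // mulr_gt0 ?l10.
  have vT2 := inS _ vS vT1; rewrite rho2 //; case: (eqVneq v bk) => [->|vbk].
    by rewrite /c2' divfK ?subrr // lt0r_neq0 ?l20.
  by rewrite ug // subr0 ltW // mulr_gt0 ?l20.
pose Q2 := [fset v in S | rho v != 0].
have pQ2 : posdep Q2 := posdep_supp rho0 rhoS.
have Q2S : Q2 `<=` S by apply/fsubsetP => v; rewrite !inE => /andP[].
have sub1 : T1 `\ aj `<=` Q2.
  apply/fsubsetP => v; rewrite in_fsetD1 => /andP[vaj vT1].
  rewrite !inE (fsubsetP T1S _ vT1) /= rho1 // ub // subr0.
  by apply: lt0r_neq0; rewrite mulr_gt0 ?l10.
have sub2 : T2 `\ bk `<=` Q2.
  apply/fsubsetP => v; rewrite in_fsetD1 => /andP[vbk vT2].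
  rewrite !inE (fsubsetP T2S _ vT2) /= rho2 // ug // subr0.
  by apply: lt0r_neq0; rewrite mulr_gt0 ?l20.
have e1 : sp (T1 `\ aj) = sp T1.
  by apply: circ_sub_span => //; [exact: fsubD1set | rewrite {1}(cardfsD1 aj T1) ajT1].
have e2 : sp (T2 `\ bk) = sp T2.
  by apply: circ_sub_span => //; [exact: fsubD1set | rewrite {1}(cardfsD1 bk T2) bkT2].
have spQ2 : sp Q2 = fullv.
  apply/eqP; rewrite eqEsubv subvf /= -full12 subv_add -e1 -e2.
  by rewrite !sp_sub.
have := mini mS Q2S pQ2 spQ2; move/fsetP/(_ aj).
by rewrite !inE rhoaj eqxx andbF (fsubsetP T1S _ ajT1).
Qed.

End G.

Section H.
Variable R : realType.
Notation pt := 'rV[R]_3.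
Notation sp T := (<<enum_fset T>>%VS).

Lemma circ_critical (C : {fset pt}) k : circ C -> #|` C| = k.+1 -> critical k C.
Proof.
move=> [Cn0 pC ai] hk; split; first by split.
exact: posdep_surr_span.
Qed.

Lemma circ_le4 (C : {fset pt}) : circ C -> (#|` C| <= 4)%N.
Proof.
move=> cC; have := dim_le3 (sp C); rewrite circ_dim //.
by case: #|` C| => // n; rewrite /= ltnS.
Qed.

Lemma disj_of_card (A B : {fset pt}) : #|` A `&` B| = 0%N -> [disjoint B & A].
Proof.
move/cardfs0_eq => h; apply/fdisjointP => x xB; apply/negP => xA.
have : x \in A `&` B by rewrite in_fsetI xA xB.
by rewrite h inE.
Qed.

End H.

Local Notation sp T := (<<enum_fset T>>%VS).
Local Open Scope ring_scope.
Local Open Scope fset_scope.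

Theorem lemma20 (R : realType) (S : {fset 'rV[R]_3}) :
  minimally_surrounds S ->
  [\/ critical 3 S,
      exists T1 T2 : {fset 'rV[R]_3},
        [/\ critical 2 T1, critical 2 T2, S = T1 `|` T2 & #|` T1 `&` T2| = 1%N],
      exists T L : {fset 'rV[R]_3},
        [/\ critical 2 T, critical 1 L, S = T `|` L & [disjoint T & L]]
    | exists L1 L2 L3 : {fset 'rV[R]_3},
        [/\ critical 1 L1, critical 1 L2, critical 1 L3,
            S = L1 `|` L2 `|` L3 &
            [/\ [disjoint L1 & L2], [disjoint L1 & L3] & [disjoint L2 & L3]]]].
Proof.
move=> mS; have [sS _] := mS.
have pS := surr_posdep sS; have spS := surr_span sS.
have cov : forall v, v \in S -> exists C : {fset 'rV[R]_3}, [/\ C `<=` S, circ C & v \in C].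
  by move=> v vS; exact: (cover_circ (leqnn _) pS vS).
have pc : forall C : {fset 'rV[R]_3}, circ C -> posdep C by move=> C [].
have nz : forall (x : 'rV[R]_3) (U : {vspace 'rV[R]_3}), x \notin U -> x != 0.
  by move=> x U; apply: contra => /eqP ->; rewrite mem0v.
have nsub : forall (C T : {fset 'rV[R]_3}) x, x \in C -> x \notin sp T ->
    ~~ (sp C <= sp T)%VS.
  by move=> C T x xC xT; apply/negP => /subvP /(_ x (memv_span xC)); apply/negP.
case: (classic (exists C, [/\ C `<=` S, circ C & #|` C| = 4%N])).
  move=> [C [CS cC h4]]; apply: Or41.
  have eC : C = S.
    apply: mini mS CS (pc _ cC) _; apply: full_dim; by rewrite circ_dim // h4.
  by rewrite -eC; apply: circ_critical.
move=> nA.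
have le3 : forall C, C `<=` S -> circ C -> (#|` C| <= 3)%N.
  move=> C CS cC; have := circ_le4 cC; rewrite leq_eqVlt => /orP[/eqP h|//].
  by exfalso; apply: nA; exists C.
case: (classic (exists T1, [/\ T1 `<=` S, circ T1 & #|` T1| = 3%N])).
  move=> [T1 [T1S c1 h1]].
  have d1 : \dim (sp T1) = 2%N by rewrite circ_dim // h1.
  have [x xS xP1] : exists2 x, x \in S & x \notin (sp T1) by apply: exists_out spS _; rewrite d1.
  have [C2 [C2S c2 xC2]] := cov x xS.
  have h2 : (2 <= #|` C2|)%N := circ_card2 c2 xC2 (nz _ _ xP1).
  have h3 := le3 _ C2S c2.
  have n21 := nsub _ _ _ xC2 xP1.
  have SU : T1 `|` C2 = S.
    apply: mini mS _ (posdepU (pc _ c1) (pc _ c2)) _.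
      by rewrite fsubUset T1S C2S.
    by apply: full_dim; rewrite sp_U; have := dim_lt_add n21; rewrite d1.
  have meet := circ_meet c2 n21.
  have : #|` C2| = 2%N \/ #|` C2| = 3%N.
    by move: h2 h3; case: #|` C2| => [|[|[|[|]]]] //; auto.
  case=> hC2.
    apply: Or43; exists T1, C2; split => //.
    - exact: circ_critical.
    - exact: circ_critical.
    - apply: disj_of_card; move: meet; rewrite hC2.
      by case: #|` C2 `&` T1|.
  have : #|` C2 `&` T1| = 1%N \/ #|` C2 `&` T1| = 0%N.
    by move: meet; rewrite hC2; case: #|` C2 `&` T1| => [|[|]] //; auto.
  case=> hI.
    apply: Or42; exists T1, C2; split => //.
    - exact: circ_critical.
    - exact: circ_critical.
    - by rewrite fsetIC.
  exfalso; apply: (bad mS c1 c2 h1 hC2 (disj_of_card hI) (esym SU) n21).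
move=> nB.
have two : forall C x, C `<=` S -> circ C -> x \in C -> x != 0 -> #|` C| = 2%N.
  move=> C x CS cC xC x0; have h2 := circ_card2 cC xC x0.
  have h3 := le3 _ CS cC.
  have n3 : #|` C| != 3%N by apply/eqP => h; apply: nB; exists C.
  by move: h2 h3 n3; case: #|` C| => [|[|[|[|]]]].
have [x1 x1S x1U] : exists2 x, x \in S & x \notin (0%VS) by apply: exists_out spS _; rewrite dimv0.
have [C1 [C1S c1 x1C1]] := cov x1 x1S.
have h1 := two _ _ C1S c1 x1C1 (nz _ _ x1U).
have d1 : \dim (sp C1) = 1%N by rewrite circ_dim // h1.
have [x2 x2S x2U] : exists2 x, x \in S & x \notin (sp C1) by apply: exists_out spS _; rewrite d1.
have [C2 [C2S c2 x2C2]] := cov x2 x2S.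
have h2 := two _ _ C2S c2 x2C2 (nz _ _ x2U).
have d2 : \dim (sp C2) = 1%N by rewrite circ_dim // h2.
have n21 := nsub _ _ _ x2C2 x2U.
have d12 : \dim (sp (C1 `|` C2)) = 2%N.
  apply/eqP; rewrite eqn_leq; apply/andP; split.
    rewrite sp_U; have := dimv_sum_cap (sp C1) (sp C2); rewrite d1 d2 => h.
    by apply: leq_trans (leq_addr (\dim (sp C1 :&: sp C2)%VS) _) _; rewrite h.
  by rewrite sp_U; have := dim_lt_add n21; rewrite d1.
have [x3 x3S x3U] : exists2 x, x \in S & x \notin (sp (C1 `|` C2)) by apply: exists_out spS _; rewrite d12.
have [C3 [C3S c3 x3C3]] := cov x3 x3S.
have h3 := two _ _ C3S c3 x3C3 (nz _ _ x3U).
have n3 := nsub _ _ _ x3C3 x3U.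
have SU : C1 `|` C2 `|` C3 = S.
  apply: mini mS _ (posdepU (posdepU (pc _ c1) (pc _ c2)) (pc _ c3)) _.
    by rewrite !fsubUset C1S C2S C3S.
  by apply: full_dim; rewrite sp_U; have := dim_lt_add n3; rewrite d12.
have m12 := circ_meet c2 n21; rewrite h2 in m12.
have m3 := circ_meet c3 n3; rewrite h3 in m3.
have e3 : #|` C3 `&` (C1 `|` C2)| = 0%N by move: m3; case: #|` _ `&` _|.
have /fdisjointP d3 := disj_of_card e3.
apply: Or44; exists C1, C2, C3; split => //.
- exact: circ_critical.
- exact: circ_critical.
- exact: circ_critical.
split.
- by apply: disj_of_card; move: m12; case: #|` C2 `&` C1|.
- by apply/fdisjointP => a aC1; apply: d3; rewrite in_fsetU aC1.
- by apply/fdisjointP => a aC2; apply: d3; rewrite in_fsetU aC2 orbT.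
Qed.
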